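(* Let $P,Q$ be integers with $PQ\ne0$, $\gcd(P,Q)=1$ and $\Delta:=P^2-4Q>0$, let $\alpha,\beta$ be the roots of $x^2-Px+Q$ with $|\alpha|\ge|\beta|$, and assume $\alpha/\beta$ is not a root of unity. Let $U_n=(\alpha^n-\beta^n)/(\alpha-\beta)$. Then for all positive integers $m,\ell$ with $m\ge\ell$, \[\left|U_\ell\binom{m}{\ell}_{\boldsymbol U}\right|\ge|\alpha|^{\ell(m-\ell-1)-1}.\]
   Context: $U_0=0,U_1=1,U_{n+2}=PU_{n+1}-QU_n$. For $m\ge\ell\ge1$, $\binom{m}{\ell}_{\boldsymbol U}:=\frac{U_mU_{m-1}\cdots U_{m-\ell+1}}{U_1U_2\cdots U_\ell}$. *)

(* Defs.v *)
From HB Require Import structures.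
From mathcomp Require Import all_boot all_order all_algebra.
From mathcomp Require Import reals.
Set Implicit Arguments. Unset Strict Implicit. Unset Printing Implicit Defensive.
Import Order.TTheory GRing.Theory Num.Theory.
Local Open Scope ring_scope.

Fixpoint lucasU_pair (P Q : int) (n : nat) : int * int :=
  match n with
  | 0%N => (0, 1)
  | k.+1 => let: (a, b) := lucasU_pair P Q k in (b, P * b - Q * a)
  end.

Definition lucasU (P Q : int) (n : nat) : int := (lucasU_pair P Q n).1.

Definition lucas_binom (R : fieldType) (P Q : int) (m l : nat) : R :=
  (\prod_(i < l) (lucasU P Q (m - i))%:~R) / (\prod_(i < l) (lucasU P Q i.+1)%:~R).

(* Main.v *)
Require Import Defs.
From HB Require Import structures.
From mathcomp Require Import all_boot all_order all_algebra.
From mathcomp Require Import reals.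
From mathcomp Require Import zify ring lra.
Import Order.TTheory GRing.Theory Num.Theory.
Local Open Scope ring_scope.

Lemma lucasU_rec (P Q : int) n :
  lucasU P Q n.+2 = P * lucasU P Q n.+1 - Q * lucasU P Q n.
Proof. by rewrite /lucasU /=; case: lucasU_pair. Qed.

Section L.
Variables (R : realType) (P Q : int) (alpha beta : R).
Hypothesis hPQ : P * Q != 0.
Hypothesis hD : 0 < P ^+ 2 - 4 * Q.
Hypothesis hP : alpha + beta = P%:~R.
Hypothesis hQ : alpha * beta = Q%:~R.
Hypothesis hab : `|beta| <= `|alpha|.

Let u n : R := (lucasU P Q n)%:~R.

Lemma u_step n : u n.+1 = alpha * u n + beta ^+ n.
Proof.
elim: n => [|n IH]; first by rewrite /u /lucasU /= mulr0 add0r expr0.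
rewrite /u lucasU_rec rmorphB !rmorphM /= -hP -hQ -/(u n) -/(u n.+1) IH exprS.
ring.
Qed.

Lemma u_closed n : u n * (alpha - beta) = alpha ^+ n - beta ^+ n.
Proof.
elim: n => [|n IH]; first by rewrite /u /lucasU /= mul0r !expr0 subrr.
rewrite u_step mulrDl -mulrA IH !exprS; ring.
Qed.

Lemma ab1 : 1 <= `|alpha| - `|beta|.
Proof.
have P0 : P != 0 by move: hPQ; rewrite mulf_eq0 negb_or => /andP[].
have h1 : (1 <= P ^+ 2)%R by move: P0; lia.
have h2 : (1 <= P ^+ 2 - 4 * Q)%R by lia.
have r1 : 1 <= (alpha + beta) ^+ 2 by rewrite hP -rmorphXn /= ler1z.
have r2 : 1 <= (alpha + beta) ^+ 2 - 4 * (alpha * beta).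
  by rewrite hP hQ -rmorphXn /= -[4]/(4%:~R) -rmorphM -rmorphB /= ler1z.
have ea : `|alpha| ^+ 2 = alpha ^+ 2 by rewrite real_normK ?num_real.
have eb : `|beta| ^+ 2 = beta ^+ 2 by rewrite real_normK ?num_real.
have eab : `|alpha| * `|beta| = `|alpha * beta| by rewrite normrM.
have sq : 1 <= (`|alpha| - `|beta|) ^+ 2.
  have -> : (`|alpha| - `|beta|) ^+ 2 = alpha ^+ 2 + beta ^+ 2 - 2 * `|alpha * beta|.
    by rewrite -ea -eb -eab; ring.
  have [h|h] := lerP 0 (alpha * beta).
    rewrite ger0_norm //; nra.
  rewrite ltr0_norm //; nra.
have : 0 <= `|alpha| - `|beta| by rewrite subr_ge0.
nra.
Qed.

Lemma u_up n : `|u n| <= `|alpha| ^+ n - `|beta| ^+ n.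
Proof.
have h := ab1.
elim: n => [|n IH]; first by rewrite /u /lucasU /= normr0 !expr0 subrr.
rewrite u_step.
have hb : 0 <= `|beta| ^+ n by rewrite exprn_ge0.
apply: (le_trans (ler_normD _ _)); rewrite normrM normrX !exprS.
have hb0 : 0 <= `|beta| by [].
have ha0 : 0 <= `|alpha| by [].
have := normr_ge0 (u n).
nra.
Qed.

Lemma u_low k : `|alpha| ^+ k <= `|u k.+2|.
Proof.
have h := ab1.
have e : `|u k.+2| * `|alpha - beta| = `|alpha ^+ k.+2 - beta ^+ k.+2|
  by rewrite -normrM u_closed.
have h1 := lerB_dist (alpha ^+ k.+2) (beta ^+ k.+2).
rewrite !normrX in h1.
have h2 := ler_normB alpha beta.
have hB : `|beta| ^+ k <= `|alpha| ^+ k by apply: lerXn2r; rewrite ?nnegrE.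
have hB0 : 0 <= `|beta| ^+ k by rewrite exprn_ge0.
have hb0 : 0 <= `|beta| by [].
have hu0 := normr_ge0 (u k.+2).
have h3 : `|alpha| ^+ k * (`|alpha| + `|beta|) <= `|u k.+2| * (`|alpha| + `|beta|).
  rewrite !exprSr in h1 e.
  set A := `|alpha| ^+ k in hB h1 e *; set B := `|beta| ^+ k in hB hB0 h1 e *.
  set U := `|u k.+2| in hu0 e *.
  have h4 : U * `|alpha - beta| <= U * (`|alpha| + `|beta|) by apply: ler_wpM2l.
  have h5 : 0 <= (A - B) * `|beta| ^+ 2 by apply: mulr_ge0; rewrite ?subr_ge0 ?exprn_ge0.
  have h6 : 0 <= A * ((`|alpha| - `|beta| - 1) * (`|alpha| + `|beta|)).
    apply: mulr_ge0; first by apply: le_trans hB.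
    apply: mulr_ge0; first by rewrite subr_ge0.
    by apply: addr_ge0.
  nra.
have hp : 0 < `|alpha| + `|beta| by lra.
by rewrite ler_pM2r in h3.
Qed.

Lemma a1 : 1 <= `|alpha|.
Proof. have := ab1; have := normr_ge0 beta; lra. Qed.

Lemma low_z n : (0 < n)%N -> `|alpha| ^ (n%:Z - 2) <= `|u n|.
Proof.
have ha := a1.
case: n => [//|[|k]] _.
  rewrite (_ : 1%:Z - 2 = -1) // exprN1 /u /lucasU /= normr1 invf_le1 //; lra.
rewrite (_ : k.+2%:Z - 2 = k%:Z); last by lia.
by rewrite -exprnP u_low.
Qed.

Lemma up_z n : `|u n| <= `|alpha| ^ n%:Z.
Proof.
rewrite -exprnP; apply: le_trans (u_up n) _.
have := exprn_ge0 n (normr_ge0 beta); lra.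
Qed.
End L.

Theorem lemma9 (R : realType) (P Q : int) (alpha beta : R) :
  P * Q != 0 ->
  gcdz P Q = 1 ->
  0 < P ^+ 2 - 4 * Q ->
  alpha + beta = P%:~R -> alpha * beta = Q%:~R ->
  `|beta| <= `|alpha| ->
  ~ (exists n : nat, (0 < n)%N /\ (alpha / beta) ^+ n = 1) ->
  forall m l : nat, (1 <= l)%N -> (l <= m)%N ->
    `|alpha| ^ (l%:Z * (m%:Z - l%:Z - 1) - 1)
      <= `|(lucasU P Q l)%:~R * lucas_binom R P Q m l|.
Proof.
move=> hPQ _ hD hP hQ hab _ m l hl hlm.
have ha1 := @a1 _ _ _ _ _ hPQ hD hP hQ hab.
have ha0 : `|alpha| != 0 by apply/eqP => e; move: ha1; rewrite e; lra.
have hapos : 0 < `|alpha| by lra.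
have LZ := @low_z _ _ _ _ _ hPQ hD hP hQ hab.
have UZ := @up_z _ _ _ _ _ hPQ hD hP hQ hab.
case: l hl hlm => // l' _ hlm.
rewrite /lucas_binom big_ord_recr /= [in X in X^-1]big_ord_recr /=.
set U := fun n => (lucasU P Q n)%:~R : R.
rewrite -/(U l'.+1) -/(U (m - l')%N).
set N := \prod_(i < l') _.
set D := \prod_(i < l') _.
set z := (m%:Z - l'.+1%:Z - 1).
set c := `|alpha| ^ z.
have c0 : 0 <= c by apply: exprz_ge0.
have Upos : 0 < `|U l'.+1|.
  by have := LZ l'.+1 isT; apply: lt_le_trans; apply: exprz_gt0.
have Dpos : 0 < `|D|.
  rewrite /D normr_prod; apply: prodr_gt0 => i _.
  by have := LZ i.+1 isT; apply: lt_le_trans; apply: exprz_gt0.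
have key : c ^+ l' * `|D| <= `|N|.
  rewrite /D /N !normr_prod [X in _ * X](reindex_inj rev_ord_inj) /=.
  have -> : c ^+ l' = \prod_(i < l') c by rewrite prodr_const card_ord.
  rewrite -big_split /=.
  apply: ler_prod => i _; apply/andP; split.
    by apply: mulr_ge0.
  have hi := ltn_ord i.
  rewrite subnSK //.
  apply: le_trans (ler_wpM2l c0 (UZ _)) _.
  rewrite /c -expfzDr //.
  apply: le_trans (LZ _ _); last by lia.
  rewrite (_ : z + (l' - i)%N%:Z = (m - i)%N%:Z - 2) //.
  rewrite /z; lia.
have last : c <= `|U (m - l')%N|.
  apply: le_trans (LZ _ _); last by lia.
  by rewrite /c /z (_ : (m%:Z - l'.+1%:Z - 1) = (m - l')%N%:Z - 2) //; lia.
have e : U l'.+1 * (N * U (m - l')%N / (D * U l'.+1)) = N * U (m - l')%N / D.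
  have : U l'.+1 != 0 by rewrite -normr_gt0.
  by move=> hU; rewrite invfM mulrC -!mulrA mulVf // mulr1.
rewrite e normrM normfV normrM.
have ce : `|alpha| ^ (l'.+1%:Z * z - 1) <= c ^+ l' * c.
  rewrite -exprSr exprnP /c exprz_exp expfzDr // exprN1 [z * _]mulrC.
  rewrite -[X in _ <= X]mulr1; apply: ler_wpM2l; first exact: exprz_ge0.
  by rewrite invf_le1.
apply: le_trans ce _.
rewrite ler_pdivlMr // mulrAC; apply: ler_pM => //.
  by apply: mulr_ge0 => //; apply: exprn_ge0.
Qed.
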